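(* Let $n\ge3$, $k\ge0$ with $k<n\le2k$. If $S\subseteq\mathrm{Inc}(A,B)$ is independent in $G_n^k$ and not reversible, then every strict alternating cycle contained in $S$ has size $3$.
   Context: For integers $n\ge3$, $k\ge0$, the crown $S_n^k$ is the poset with ground set $A\cup B$, $A=\{a_1,\dots,a_{n+k}\}$, $B=\{b_1,\dots,b_{n+k}\}$, indices cyclic modulo $n+k$; elements of $A$ are pairwise incomparable, as are elements of $B$, and $a_i$ is incomparable to $b_j$ when $j\in\{i,\dots,i+k\}$ (mod $n+k$), while $a_i<b_j$ otherwise. $\mathrm{Inc}(A,B)$ is the set of pairs $(a,b)\in A\times B$ with $a$ incomparable to $b$; $G_n^k$ has vertex set $\mathrm{Inc}(A,B)$ with $(a,b)$ adjacent to $(x,y)$ iff $a<y$ and $x<b$. A set $R\subseteq\mathrm{Inc}(A,B)$ is reversible if some linear extension $L$ of $S_n^k$ has $b<a$ in $L$ for all $(a,b)\in R$. An indexed set $\{(x_\alpha,y_\alpha):\alpha\in[m]\}\subseteq\mathrm{Inc}(A,B)$ is an alternating cycle of size $m$ if $x_\alpha\le y_{\alpha-1}$ for all $\alpha$ (indices cyclic mod $m$); it is strict if $x_\alpha\le y_\beta$ holds iff $\beta=\alpha-1$. *)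

(* Defs.v *)
From mathcomp Require Import all_boot.
Unset Implicit Arguments.

(* Crown S_n^k with N = n + k.  a_i is encoded by i : 'I_(n+k) (left
   component), b_j by j : 'I_(n+k) (right component).  *)

(* a_i < b_j in S_n^k : j is NOT in {i, ..., i+k} modulo n+k *)
Definition crown_ltAB (n k : nat) (i j : 'I_(n + k)) : bool :=
  k < (j + (n + k) - i) %% (n + k).

Definition crown_incAB (n k : nat) (i j : 'I_(n + k)) : bool :=
  ~~ crown_ltAB n k i j.

Definition crown_lt (n k : nat) (u v : 'I_(n + k) + 'I_(n + k)) : bool :=
  match u, v with
  | inl i, inr j => crown_ltAB n k i j
  | _, _ => false
  end.

(* x <= y for x in A, y in B (A, B disjoint, so <= is < ) *)
Definition crown_le (n k : nat) (x y : 'I_(n + k)) : bool :=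
  crown_lt n k (inl x) (inr y).

Definition Inc (n k : nat) : {set 'I_(n + k) * 'I_(n + k)} :=
  [set p | crown_incAB n k p.1 p.2].

Definition G_adj (n k : nat) (p q : 'I_(n + k) * 'I_(n + k)) : bool :=
  crown_ltAB n k p.1 q.2 && crown_ltAB n k q.1 p.2.

Definition G_independent (n k : nat) (S : {set 'I_(n + k) * 'I_(n + k)}) : Prop :=
  S \subset Inc n k /\
  forall p q, p \in S -> q \in S -> p != q -> ~~ G_adj n k p q.

Definition linear_extension (n k : nat) (f : 'I_(n + k) + 'I_(n + k) -> nat) : Prop :=
  injective f /\ forall u v, crown_lt n k u v -> f u < f v.

Definition reversible (n k : nat) (R : {set 'I_(n + k) * 'I_(n + k)}) : Prop :=
  exists f, linear_extension n k f /\
    forall p, p \in R -> f (inr p.2) < f (inl p.1).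

Definition cpred (m a : nat) : nat := (a + m - 1) %% m.

Definition alternating_cycle (n k m : nat) (x y : nat -> 'I_(n + k)) : Prop :=
  0 < m /\
  (forall a, a < m -> (x a, y a) \in Inc n k) /\
  (forall a b, a < m -> b < m -> (x a, y a) = (x b, y b) -> a = b) /\
  (forall a, a < m -> crown_le n k (x a) (y (cpred m a))).

Definition strict_alternating_cycle (n k m : nat) (x y : nat -> 'I_(n + k)) : Prop :=
  alternating_cycle n k m x y /\
  (forall a b, a < m -> b < m -> crown_le n k (x a) (y b) <-> b = cpred m a).

(* Main.v *)
Require Import Defs.
From mathcomp Require Import all_boot.
From mathcomp Require Import zify.

Definition fd (N z c : nat) := (z + N - c) %% N.

Lemma fE N z c : z < N -> c < N -> fd N z c = if c <= z then z - c else z + N - c.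
Proof.
move=> zN cN; rewrite /fd; case: leqP => h.
  have -> : z + N - c = (z - c) + N by lia.
  by rewrite modnDr modn_small //; lia.
by rewrite modn_small //; lia.
Qed.

Lemma fd_lt N z c : 0 < N -> fd N z c < N.
Proof. by move=> h; rewrite /fd ltn_mod. Qed.
Arguments fd_lt {N} z c.

Lemma fcomp N z c c0 : z < N -> c < N -> c0 < N ->
  fd N (fd N z c0) (fd N c c0) = fd N z c.
Proof.
move=> zN cN c0N.
have N0 : 0 < N by lia.
rewrite (fE _ _ _ (fd_lt _ _ N0) (fd_lt _ _ N0)) (fE _ _ _ zN c0N) (fE _ _ _ cN c0N) (fE _ _ _ zN cN).
case: (leqP c0 z) => h1; case: (leqP c0 c) => h2; case: (leqP c z) => h3;
  case: ifP => h4; lia.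
Qed.

Lemma mid N k a b d c : 2 * k < N -> a < b -> b < d -> d <= k -> c < N ->
  fd N a c <= k -> fd N d c <= k -> k < fd N b c -> False.
Proof.
move=> hN ab bd dk cN.
rewrite (fE _ _ _ _ cN) ?(fE _ _ _ _ cN) ?(fE _ _ _ _ cN); try lia.
case: (leqP c a); case: (leqP c d); case: (leqP c b); lia.
Qed.

Lemma three N k a b d ca cb cd : 2 * k < N -> a <= k -> b <= k -> d <= k ->
  ca < N -> cb < N -> cd < N ->
  fd N b ca <= k -> fd N d ca <= k -> k < fd N a ca ->
  fd N a cb <= k -> fd N d cb <= k -> k < fd N b cb ->
  fd N a cd <= k -> fd N b cd <= k -> k < fd N d cd -> False.
Proof.
move=> hN ak bk dk caN cbN cdN h1 h2 h3 h4 h5 h6 h7 h8 h9.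
have ab : a != b by apply/eqP=> e; subst; lia.
have ad : a != d by apply/eqP=> e; subst; lia.
have bd : b != d by apply/eqP=> e; subst; lia.
have [o|[o|[o|[o|[o|o]]]]] : (a < b < d) \/ (a < d < b) \/ (b < a < d) \/
   (b < d < a) \/ (d < a < b) \/ (d < b < a) by lia.
- case/andP: o => o1 o2; exact: (mid _ _ _ _ _ _ hN o1 o2 dk cbN h4 h5 h6).
- case/andP: o => o1 o2; exact: (mid _ _ _ _ _ _ hN o1 o2 bk cdN h7 h8 h9).
- case/andP: o => o1 o2; exact: (mid _ _ _ _ _ _ hN o1 o2 dk caN h1 h2 h3).
- case/andP: o => o1 o2; exact: (mid _ _ _ _ _ _ hN o1 o2 ak cdN h8 h7 h9).
- case/andP: o => o1 o2; exact: (mid _ _ _ _ _ _ hN o1 o2 bk caN h2 h1 h3).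
- case/andP: o => o1 o2; exact: (mid _ _ _ _ _ _ hN o1 o2 ak cbN h5 h4 h6).
Qed.

Lemma absl N k c0 a b d ca cb cd : 2 * k < N -> c0 < N -> a < N -> b < N -> d < N ->
  ca < N -> cb < N -> cd < N ->
  fd N a c0 <= k -> fd N b c0 <= k -> fd N d c0 <= k ->
  fd N b ca <= k -> fd N d ca <= k -> k < fd N a ca ->
  fd N a cb <= k -> fd N d cb <= k -> k < fd N b cb ->
  fd N a cd <= k -> fd N b cd <= k -> k < fd N d cd -> False.
Proof.
move=> hN c0N aN bN dN caN cbN cdN g1 g2 g3 h1 h2 h3 h4 h5 h6 h7 h8 h9.
have N0 : 0 < N by lia.
apply: (three _ _ _ _ _ _ _ _ hN g1 g2 g3 (fd_lt ca c0 N0) (fd_lt cb c0 N0) (fd_lt cd c0 N0));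
  by rewrite fcomp.
Qed.

Lemma cpredS M a : 0 < a < M -> cpred M a = a.-1.
Proof.
move=> h; rewrite /cpred.
have -> : a + M - 1 = a.-1 + M by lia.
by rewrite modnDr modn_small //; lia.
Qed.

Theorem proposition5p1 (n k : nat) (S : {set 'I_(n + k) * 'I_(n + k)}) :
  3 <= n -> k < n -> n <= 2 * k ->
  G_independent n k S -> ~ reversible n k S ->
  forall (m : nat) (x y : nat -> 'I_(n + k)),
    strict_alternating_cycle n k m x y ->
    (forall a, a < m -> (x a, y a) \in S) ->
    m = 3.
Proof.
move=> n3 kn _ [_ indep] _ m x y [[m0 [inc [inj alt]]] str] inS.
have hN : 2 * k < n + k by lia.
have le_fd : forall a b, crown_le n k (x a) (y b) = (k < fd (n + k) (y b) (x a)) by [].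
case: m m0 inc inj alt str inS => [//|[|[|[|m]]]] _ inc inj alt str inS //.
- have := alt 0 isT; have := inc 0 isT; rewrite inE /crown_incAB /= /cpred /=.
  by rewrite /crown_le /= => /negP.
- have ne : (x 0, y 0) != (x 1, y 1) by apply/eqP => /(inj 0 1 isT isT).
  have := indep _ _ (inS 0 isT) (inS 1 isT) ne.
  have h0 := alt 0 isT; have h1 := alt 1 isT.
  by rewrite /G_adj /=; move: h0 h1; rewrite /cpred /crown_le /= => -> ->.
- exfalso.
  set e := if m == 0 then 0 else 4.
  have eM : e < m.+4 by rewrite /e; case: ifP => [_|/negbT h] //; lia.
  have ce : cpred m.+4 e = 3.
    rewrite /e; case: ifP => [/eqP -> //|/negbT h].
    by rewrite cpredS //; lia.
  have c1 : cpred m.+4 1 = 0 by rewrite cpredS //; lia.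
  have c2 : cpred m.+4 2 = 1 by rewrite cpredS //; lia.
  have c3 : cpred m.+4 3 = 2 by rewrite cpredS //; lia.
  have Y : forall a b, a < m.+4 -> b < m.+4 -> b <> cpred m.+4 a ->
      fd (n + k) (y b) (x a) <= k.
    move=> a b ha hb hne; rewrite leqNgt -le_fd; apply/negP => /(str a b ha hb).
    exact: hne.
  have X : forall a b, a < m.+4 -> b < m.+4 -> b = cpred m.+4 a ->
      k < fd (n + k) (y b) (x a).
    by move=> a b ha hb hne; rewrite -le_fd; apply/(str a b ha hb).
  apply: (@absl (n + k) k (x 1) (y 1) (y 2) (y 3) (x 2) (x 3) (x e) hN) => //;
    try (apply: Y; rewrite ?c1 ?c2 ?c3 ?ce //; lia);
    try (apply: X; rewrite ?c1 ?c2 ?c3 ?ce //; lia).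
Qed.
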